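(* For all $j\ge0$ and all $x,u\in O$: (1) $D_j(\alpha x)=\alpha^jD_j(x)$ for $\alpha\in\mathbf{F}_q^*$; (2) $D_j(x+u)=\sum_{e+f=j}\binom{j}{e}D_e(x)D_f(u)$; (3) $D'_j(\alpha x)=\alpha^jD'_j(x)$ for $\alpha\in\mathbf{F}_q^*$; (4) $D'_j(x+u)=\sum_{e+f=j}\binom{j}{e}D_e(x)D'_f(u)$. Here the sums run over pairs of nonnegative integers $(e,f)$ and binomial coefficients are read in $\mathbf{F}_q$.
   Context: Let $q$ be a prime power, $O=\mathbf{F}_q[[T]]$. Hasse derivatives: $\mathcal{D}_n(\sum_ia_iT^i)=\sum_i\binom{i}{n}a_iT^{i-n}$ (binomials in $\mathbf{F}_q$). For $j\ge0$ with base-$q$ expansion $j=\alpha_0+\alpha_1q+\cdots+\alpha_sq^s$ ($0\le\alpha_i<q$): $D_j(x)=\prod_{n=0}^s\mathcal{D}_n(x)^{\alpha_n}$ ($D_0=1$), and $D'_j(x)=\prod_{n=0}^sD'_{\alpha_nq^n}(x)$ where $D'_{\alpha q^n}(x)=\mathcal{D}_n(x)^\alpha$ if $0\le\alpha<q-1$ and $D'_{(q-1)q^n}(x)=\mathcal{D}_n(x)^{q-1}-1$. *)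

(* Defs.v *)
From HB Require Import structures.
From mathcomp Require Import all_boot all_order all_algebra all_field.
Set Implicit Arguments. Unset Strict Implicit. Unset Printing Implicit Defensive.
Import GRing.Theory.
Local Open Scope ring_scope.

(* O = F_q[[T]] for a finite field F with q = #|F| elements.
   A formal power series is represented by its coefficient sequence
   (x k = coefficient of T^k). *)
Definition ps (F : finFieldType) := nat -> F.

Section PS.
Variable F : finFieldType.

Definition ps_add (x y : ps F) : ps F := fun k => x k + y k.
Definition ps_sub (x y : ps F) : ps F := fun k => x k - y k.
Definition ps_scale (a : F) (x : ps F) : ps F := fun k => a * x k.
Definition ps_one : ps F := fun k => if k == 0%N then 1 else 0.
Definition ps_mul (x y : ps F) : ps F :=
  fun k => \sum_(i < k.+1) x i * y (k - i)%N.
Definition ps_pow (x : ps F) (n : nat) : ps F := iter n (ps_mul x) ps_one.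
Definition ps_prod (m : nat) (f : nat -> ps F) : ps F :=
  foldr ps_mul ps_one (map f (iota 0 m)).
Definition ps_sum (m : nat) (f : nat -> ps F) : ps F :=
  fun k => \sum_(e < m) f e k.

(* Hasse derivative: D_n (sum a_i T^i) = sum binom(i,n) a_i T^(i-n) *)
Definition hasse (n : nat) (x : ps F) : ps F :=
  fun k => ('C(k + n, n))%:R * x (k + n)%N.

Definition q := #|F|.

Definition digit (j n : nat) : nat := (j %/ q ^ n) %% q.
Definition topdigit (j : nat) : nat := trunc_log q j.

Definition Dj (j : nat) (x : ps F) : ps F :=
  ps_prod (topdigit j).+1 (fun n => ps_pow (hasse n x) (digit j n)).

Definition Dprime_block (n a : nat) (x : ps F) : ps F :=
  if a == q.-1 then ps_sub (ps_pow (hasse n x) a) ps_one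
  else ps_pow (hasse n x) a.

Definition Dpj (j : nat) (x : ps F) : ps F :=
  ps_prod (topdigit j).+1 (fun n => Dprime_block n (digit j n) x).

End PS.

(* Main.v *)
Require Import Defs.
From HB Require Import structures.
From mathcomp Require Import all_boot all_order all_algebra all_field all_fingroup all_solvable.
From mathcomp Require Import zify ring.
From Stdlib Require Import FunctionalExtensionality.
Local Open Scope group_scope.
Import GRing.Theory.
Local Open Scope ring_scope.

Section L.
Variable F : finFieldType.
Local Notation q := (q F).

Lemma q_gt1 : (1 < q)%N.
Proof. exact: finNzRing_gt1. Qed.

Lemma frobX : ('X + 1) ^+ q = 'X ^+ q + 1 :> {poly F}.
Proof.
have [p pr pch] := finPcharP F.
rewrite exprDn_pchar ?expr1n //.
have pg : (p.-group [set: F])%g := abelem_pgroup (fin_ring_pchar_abelem pch).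
have : p.-nat q by rewrite /q -cardsT.
apply: sub_in_pnat => n _; rewrite inE /= => /eqP ->.
by rewrite pchar_poly.
Qed.
Lemma coefD1n (n i : nat) : ((('X + 1) ^+ n : {poly F})`_i) = ('C(n, i))%:R.
Proof.
rewrite exprD1n coef_sum.
under eq_bigr => k _ do rewrite coefMn coefXn.
case: (ltnP n i) => hi.
  rewrite bin_small // big1 // ; move=> k _.
  have -> : (i == k) = false by apply/negbTE; rewrite neq_ltn (leq_trans (ltn_ord k) hi) orbT.
  by rewrite mul0rn.
rewrite (bigD1 (Ordinal (hi : (i < n.+1)%N))) //= eqxx mulr1n big1 ?addr0 // ; move=> k /eqP hk.
have -> : (i == k) = false.
  by apply/negbTE; apply/eqP => e; apply: hk; apply: val_inj; rewrite /= e.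
by rewrite mul0rn.
Qed.

Lemma coefXq1 (s m : nat) : ((('X ^+ q + 1) ^+ s : {poly F})`_m) =
  if (q %| m)%N then ('C(s, m %/ q))%:R else 0.
Proof.
rewrite exprD1n coef_sum.
under eq_bigr => k _ do rewrite coefMn -exprM coefXn.
have qp := q_gt1.
case: ifP => hd.
  have hm : m = (q * (m %/ q))%N by rewrite mulnC divnK.
  case: (ltnP s (m %/ q)) => hi.
    rewrite bin_small // big1 // ; move=> k _.
    have -> : (m == q * k)%N = false.
      apply/negbTE; rewrite hm eqn_mul2l negb_or; apply/andP; split; first by rewrite -lt0n ltnW.
      by rewrite neq_ltn (leq_trans (ltn_ord k) hi) orbT.
    by rewrite mul0rn.
  rewrite (bigD1 (Ordinal (hi : (m %/ q < s.+1)%N))) //= -hm eqxx mulr1n big1 ?addr0 // ; move=> k /eqP hk.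
  have -> : (m == q * k)%N = false.
    apply/negbTE; apply/eqP => e; apply: hk; apply: val_inj; rewrite /= e mulKn //.
    by rewrite ltnW.
  by rewrite mul0rn.
rewrite big1 //; move=> k _.
have -> : (m == q * k)%N = false.
  by apply/negbTE; apply/eqP => e; move: hd; rewrite e dvdn_mulr.
by rewrite mul0rn.
Qed.
Lemma lucas (r s c e : nat) : (r < q)%N -> (c < q)%N ->
  ('C(r + q * s, c + q * e))%:R = ('C(r, c))%:R * ('C(s, e))%:R :> F.
Proof.
move=> hr hc.
have qp := q_gt1.
rewrite -coefD1n exprD exprM frobX coefM.
set m := (c + q * e)%N.
have hmc : (m %% q = c)%N by rewrite /m addnC mulnC modnMDl modn_small.
have cm : (c < m.+1)%N by rewrite ltnS leq_addr.
rewrite (bigD1 (Ordinal cm)) //= big1 ?addr0.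
  rewrite coefD1n coefXq1 /m addKn dvdn_mulr // mulKn //; exact: ltnW.
move=> j /eqP hj.
case: (ltnP r j) => hjr; first by rewrite coefD1n bin_small // mul0r.
rewrite coefXq1; case: ifP => hd; last by rewrite mulr0.
exfalso; apply: hj; apply: val_inj => /=.
have hjm : (j <= m)%N by rewrite -ltnS ltn_ord.
have : (m == j %[mod q])%N by rewrite eqn_mod_dvd.
rewrite hmc modn_small; last by apply: leq_ltn_trans hjr hr.
by move/eqP.
Qed.

Lemma sum_split (R : nmodType) (h : nat -> R) n k :
  \sum_(e < (n * k)%N) h e = \sum_(i < n) \sum_(c < k) h (c + i * k)%N.
Proof.
rewrite -(big_mkord xpredT h) big_nat_mul big_mkord; apply: eq_bigr => i _.
rewrite mulSn addnC -{1}(add0n (i * k)%N) big_addn.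
rewrite addKn big_mkord.
by [].
Qed.

Definition dP {R : pzSemiRingType} (M : nat) (f : nat -> nat -> R) (m : nat) : R :=
  \prod_(n < M) f n (digit F m n).

Lemma digit0 m : digit F m 0 = (m %% q)%N.
Proof. by rewrite /digit expn0 divn1. Qed.

Lemma digitS m n : digit F m n.+1 = digit F (m %/ q) n.
Proof. by rewrite /digit expnS divnMA. Qed.

Lemma dP_S (R : pzSemiRingType) M (f : nat -> nat -> R) m :
  dP M.+1 f m = f 0%N (m %% q)%N * dP M (fun n => f n.+1) (m %/ q)%N.
Proof.
rewrite /dP big_ord_recl digit0; congr (_ * _); apply: eq_bigr => i _.
by rewrite /bump /= digitS.
Qed.


Lemma modq_e c i : (c < q)%N -> ((c + i * q) %% q)%N = c.
Proof. by move=> hc; rewrite addnC modnMDl modn_small. Qed.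
Lemma divq_e c i : (c < q)%N -> ((c + i * q) %/ q)%N = i.
Proof. by move=> hc; rewrite addnC divnMDl ?divn_small ?addn0 // (ltn_trans _ q_gt1). Qed.

Section Main.
Variable R : comNzRingType.
Hypothesis luc : forall r s c e, (r < q)%N -> (c < q)%N ->
  ('C(r + q * s, c + q * e))%:R = ('C(r, c))%:R * ('C(s, e))%:R :> R.

Lemma term_eq r s c i (fx0 fy0 Px Py : nat -> R) : (r < q)%N -> (c < q)%N -> (i < s.+1)%N ->
  ('C(r + q * s, c + i * q))%:R * (fx0 ((c + i * q) %% q)%N * Px ((c + i * q) %/ q)%N) *
    (fy0 ((r + q * s - (c + i * q)) %% q)%N * Py ((r + q * s - (c + i * q)) %/ q)%N)
  = if (c < r.+1)%N then (('C(s, i))%:R * Px i * Py (s - i)%N) * (('C(r, c))%:R * fx0 c * fy0 (r - c)%N)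
    else 0.
Proof.
move=> hr hc hi.
rewrite [(i * q)%N]mulnC luc // -[(q * i)%N]mulnC modq_e // divq_e //.
case: ifP => hcr; last first.
  by rewrite bin_small ?mul0r //; rewrite ltnNge -ltnS hcr.
have -> : (r + q * s - (c + i * q) = (r - c) + (s - i) * q)%N.
  have h1 : (i * q <= s * q)%N by rewrite leq_mul2r -ltnS hi orbT.
  have h2 : (c <= r)%N by rewrite -ltnS.
  rewrite mulnBl [(q * s)%N]mulnC; lia.
rewrite modq_e ?divq_e //; last by rewrite (leq_ltn_trans (leq_subr _ _) hr).
ring.
by rewrite (leq_ltn_trans (leq_subr _ _) hr).
Qed.

Lemma dP_add M : forall j (fx fy fz : nat -> nat -> R), (j < q ^ M)%N ->
  (forall n r, (r < q)%N -> fz n r = \sum_(c < r.+1) ('C(r, c))%:R * fx n c * fy n (r - c)%N) ->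
  dP M fz j = \sum_(e < j.+1) ('C(j, e))%:R * dP M fx e * dP M fy (j - e)%N.
Proof.
have qp := q_gt1; have q0 : (0 < q)%N by apply: ltn_trans qp.
elim: M => [|M IH] j fx fy fz hj hz.
  move: hj; rewrite expn0 ltnS leqn0 => /eqP ->.
  rewrite /dP !big_ord0 big_ord1 bin0 subnn /=.
  by rewrite !big_ord0 !mulr1.
have [r [s [-> [hr hs]]]] : exists r s, j = (r + q * s)%N /\ (r < q)%N /\ (s < q ^ M)%N.
  exists (j %% q)%N, (j %/ q)%N; split; first by rewrite mulnC addnC -divn_eq.
  by rewrite ltn_pmod // ltn_divLR // -expnSr.
rewrite dP_S.
have -> : ((r + q * s) %% q = r)%N by rewrite mulnC modq_e.
have -> : ((r + q * s) %/ q = s)%N by rewrite mulnC divq_e.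
rewrite (IH s (fun n => fx n.+1) (fun n => fy n.+1) (fun n => fz n.+1) hs (fun n => hz n.+1)) (hz 0%N r hr).
have hle : ((r + q * s).+1 <= s.+1 * q)%N.
  by rewrite mulSn mulnC -addSn leq_add2r.
pose G := fun e : nat => ('C(r + q * s, e))%:R * (fx 0%N (e %% q)%N * dP M (fun n : nat => fx n.+1) (e %/ q)%N) *
   (fy 0%N ((r + q * s - e) %% q)%N * dP M (fun n : nat => fy n.+1) ((r + q * s - e) %/ q)%N).
have -> : \sum_(e < (r + q * s).+1) ('C(r + q * s, e))%:R * dP M.+1 fx e * dP M.+1 fy (r + q * s - e)%N
   = \sum_(e < (r + q * s).+1) G e.
  by apply: eq_bigr => e _; rewrite !dP_S.
rewrite (big_ord_widen _ G hle).
have -> : \sum_(i < (s.+1 * q)%N | (i < (r + q * s).+1)%N) G i = \sum_(i < (s.+1 * q)%N) G i.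
  rewrite big_mkcond; apply: eq_bigr => i _; case: ifP => // /negbT; rewrite -leqNgt => hl.
  by rewrite /G bin_small // !mul0r.
rewrite sum_split.
rewrite mulrC big_distrl /=; apply: eq_bigr => i _.
rewrite big_distrr /=.
pose B := ('C(s, i))%:R * dP M (fun n : nat => fx n.+1) i * dP M (fun n : nat => fy n.+1) (s - i)%N.
rewrite (eq_bigr (fun c : 'I_q => if (c < r.+1)%N then B * (('C(r, c))%:R * fx 0%N c * fy 0%N (r - c)%N) else 0)); last first.
  by move=> c _; rewrite /G term_eq.
rewrite -big_mkcond /=.
by rewrite -(big_ord_widen _ (fun c : nat => B * (('C(r, c))%:R * fx 0%N c * fy 0%N (r - c)%N)) hr).
Qed.

Lemma dP_scale M (a : R) : a ^+ q = a -> forall j (fx fz : nat -> nat -> R), (j < q ^ M)%N ->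
  (forall n r, (r < q)%N -> fz n r = a ^+ r * fx n r) ->
  dP M fz j = a ^+ j * dP M fx j.
Proof.
move=> ha; have qp := q_gt1; have q0 : (0 < q)%N by apply: ltn_trans qp.
elim: M => [|M IH] j fx fz hj hz.
  move: hj; rewrite expn0 ltnS leqn0 => /eqP ->.
  by rewrite /dP !big_ord0 expr0 mulr1.
have [r [s [-> [hr hs]]]] : exists r s, j = (r + q * s)%N /\ (r < q)%N /\ (s < q ^ M)%N.
  exists (j %% q)%N, (j %/ q)%N; split; first by rewrite mulnC addnC -divn_eq.
  by rewrite ltn_pmod // ltn_divLR // -expnSr.
rewrite !dP_S.
have -> : ((r + q * s) %% q = r)%N by rewrite mulnC modq_e.
have -> : ((r + q * s) %/ q = s)%N by rewrite mulnC divq_e.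
rewrite (IH s (fun n => fx n.+1) (fun n => fz n.+1) hs (fun n => hz n.+1)) (hz 0%N r hr).
rewrite exprD exprM ha; ring.
Qed.

End Main.

Definition approx N (x : ps F) (p : {poly F}) := forall k, (k < N)%N -> x k = p`_k.

Lemma ap_add N x y p p' : approx N x p -> approx N y p' -> approx N (ps_add x y) (p + p').
Proof. by move=> h h' k hk; rewrite coefD /ps_add h ?h'. Qed.
Lemma ap_sub N x y p p' : approx N x p -> approx N y p' -> approx N (ps_sub x y) (p - p').
Proof. by move=> h h' k hk; rewrite coefB /ps_sub h ?h'. Qed.
Lemma ap_scale N a x p : approx N x p -> approx N (ps_scale a x) (a%:P * p).
Proof. by move=> h k hk; rewrite coefCM /ps_scale h. Qed.
Lemma ap_one N : approx N (@ps_one F) 1.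
Proof. by move=> k hk; rewrite coef1 /ps_one; case: eqP. Qed.
Lemma ap_mul N x y p p' : approx N x p -> approx N y p' -> approx N (ps_mul x y) (p * p').
Proof.
move=> h h' k hk; rewrite coefM /ps_mul; apply: eq_bigr => i _.
have hi : (i <= k)%N by rewrite -ltnS ltn_ord.
rewrite h ?h' //; first exact: leq_ltn_trans (leq_subr _ _) hk.
exact: leq_ltn_trans hi hk.
Qed.
Lemma ap_pow N x p d : approx N x p -> approx N (ps_pow x d) (p ^+ d).
Proof.
move=> h; elim: d => [|d IH]; first by rewrite expr0; exact: ap_one.
by rewrite exprS /ps_pow iterS; apply: ap_mul.
Qed.
Lemma ap_prod N m (f : nat -> ps F) (P : nat -> {poly F}) :
  (forall n, approx N (f n) (P n)) -> approx N (ps_prod m f) (\prod_(n < m) P n).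
Proof.
move=> h; rewrite -(big_mkord xpredT P) /index_iota subn0 /ps_prod.
elim: (iota 0 m) => [|a s IH] /=; first by rewrite big_nil; exact: ap_one.
by rewrite big_cons; apply: ap_mul.
Qed.
Lemma ap_sum N m (f : nat -> ps F) (P : nat -> {poly F}) :
  (forall e, (e < m)%N -> approx N (f e) (P e)) -> approx N (ps_sum m f) (\sum_(e < m) P e).
Proof.
move=> h k hk; rewrite coef_sum /ps_sum; apply: eq_bigr => e _; exact: h.
Qed.

Definition H N (y : ps F) : {poly F} := \poly_(k < N) y k.
Lemma ap_H N y : approx N y (H N y).
Proof. by move=> k hk; rewrite coef_poly hk. Qed.
Lemma ap_hasse_add N n x u : approx N (hasse n (ps_add x u)) (H N (hasse n x) + H N (hasse n u)).
Proof. by move=> k hk; rewrite coefD !coef_poly hk /hasse /ps_add mulrDr. Qed.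
Lemma ap_hasse_scale N n a x : approx N (hasse n (ps_scale a x)) (a%:P * H N (hasse n x)).
Proof. by move=> k hk; rewrite coefCM !coef_poly hk /hasse /ps_scale mulrCA. Qed.

Lemma approx_eq (x y : ps F) : (forall k, exists p, approx k.+1 x p /\ approx k.+1 y p) -> x = y.
Proof.
move=> h; apply: functional_extensionality => k.
by have [p [h1 h2]] := h k; rewrite h1 ?h2.
Qed.

Definition T m := (topdigit F m).+1.

Lemma digit_big m n : (T m <= n)%N -> digit F m n = 0%N.
Proof.
move=> hn; rewrite /digit divn_small ?mod0n //.
apply: leq_trans (trunc_log_ltn _ q_gt1) _.
by rewrite leq_pexp2l // ltnW // q_gt1.
Qed.

Lemma dP_ext (R : pzSemiRingType) M (f : nat -> nat -> R) m : (T m <= M)%N -> (forall n, f n 0%N = 1) ->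
  dP M f m = dP (T m) f m.
Proof.
move=> hM h1; rewrite /dP -!(big_mkord xpredT (fun n => f n (digit F m n))).
rewrite (@big_cat_nat _ _ _ (T m)) //= [X in _ * X]big1_seq ?mulr1 // => n /andP [_].
by rewrite mem_index_iota => /andP [hn _]; rewrite digit_big.
Qed.

Lemma T_mono e j : (e <= j)%N -> (T e <= T j)%N.
Proof. by move=> h; rewrite ltnS leq_trunc_log. Qed.

Lemma j_lt j : (j < q ^ T j)%N.
Proof. exact: trunc_log_ltn q_gt1. Qed.


Definition blk (y : {poly F}) (d : nat) : {poly F} := if d == q.-1 then y ^+ d - 1 else y ^+ d.

Lemma ap_Dj_gen N e y (P : nat -> {poly F}) : (forall n, approx N (hasse n y) (P n)) ->
  approx N (Dj e y) (dP (T e) (fun n d => P n ^+ d) e).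
Proof. by move=> h; rewrite /Dj /dP /T; apply: (ap_prod _ _ _ (fun n => P n ^+ digit F e n)) => n; apply: ap_pow. Qed.

Lemma ap_Dpj_gen N e y (P : nat -> {poly F}) : (forall n, approx N (hasse n y) (P n)) ->
  approx N (Dpj e y) (dP (T e) (fun n d => blk (P n) d) e).
Proof.
move=> h; rewrite /Dpj /dP /T; apply: (ap_prod _ _ _ (fun n => blk (P n) (digit F e n))) => n; rewrite /Dprime_block /blk.
case: eqP => _; last exact: ap_pow.
by apply: ap_sub; [exact: ap_pow | exact: ap_one].
Qed.

Lemma lucP r s c e : (r < q)%N -> (c < q)%N ->
  ('C(r + q * s, c + q * e))%:R = ('C(r, c))%:R * ('C(s, e))%:R :> {poly F}.
Proof. by move=> hr hc; rewrite -!polyC_natr lucas // polyCM. Qed.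

Lemma hzD (a b : {poly F}) r : (a + b) ^+ r = \sum_(c < r.+1) ('C(r, c))%:R * a ^+ c * b ^+ (r - c)%N.
Proof.
rewrite addrC exprDn; apply: eq_bigr => i _; rewrite -mulr_natl; ring.
Qed.

Lemma blk0 y : blk y 0 = 1.
Proof.
rewrite /blk; case: eqP => h; last by rewrite expr0.
by have := q_gt1; move: h; case: (q) => [|[|k]].
Qed.

Lemma hzDp (a b : {poly F}) r : (r < q)%N ->
  blk (a + b) r = \sum_(c < r.+1) ('C(r, c))%:R * a ^+ c * blk b (r - c)%N.
Proof.
move=> hr; have qp := q_gt1.
case: (boolP (r == q.-1)) => hrq.
  rewrite {1}/blk hrq hzD big_ord_recl [RHS]big_ord_recl /= subn0.
  have -> : blk b r = b ^+ r - 1 by rewrite /blk hrq.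
  rewrite [in RHS](eq_bigr (fun i : 'I_r => ('C(r, bump 0 i))%:R * a ^+ bump 0 i * b ^+ (r - bump 0 i)%N)); last first.
    move=> i _; rewrite /blk.
    have -> : (r - bump 0 i == q.-1)%N = false.
      apply/negbTE; rewrite -(eqP hrq) neq_ltn; apply/orP; left.
      by rewrite /bump /= subnS prednK ?subn_gt0 ?ltn_ord // leq_subr.
    by [].
  rewrite bin0 expr0 !mul1r; ring.
rewrite /blk (negbTE hrq) hzD; apply: eq_bigr => c _.
have -> : (r - c == q.-1)%N = false.
  apply/negbTE; apply: contra hrq => /eqP h; apply/eqP.
  have : (r - c <= r)%N by apply: leq_subr.
  rewrite h => h1; apply/eqP; rewrite eqn_leq h1 andbT.
  by rewrite -ltnS prednK // (ltn_trans _ qp).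
by [].
Qed.


Lemma al_pred (al : F) : al != 0 -> al ^+ q.-1 = 1.
Proof.
move=> hal; have qp := q_gt1.
have h : al ^+ q = al := expf_card al; rewrite -(prednK (ltn_trans _ qp)) // exprSr in h.
by apply: (mulIf hal); rewrite mul1r.
Qed.

Lemma blk_scale (al : F) a r : al != 0 -> blk (al%:P * a) r = (al%:P) ^+ r * blk a r.
Proof.
move=> hal; rewrite /blk; case: eqP => h; last by rewrite exprMn.
by rewrite exprMn -polyC_exp h al_pred // polyC1 !mul1r.
Qed.

Lemma main_all (j : nat) (x u : ps F) :
  (forall alpha : F, alpha != 0 ->
     Dj j (ps_scale alpha x) = ps_scale (alpha ^+ j) (Dj j x)) /\
  Dj j (ps_add x u) =
    ps_sum j.+1 (fun e => ps_scale ('C(j, e))%:R (ps_mul (Dj e x) (Dj (j - e) u))) /\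
  (forall alpha : F, alpha != 0 ->
     Dpj j (ps_scale alpha x) = ps_scale (alpha ^+ j) (Dpj j x)) /\
  Dpj j (ps_add x u) =
    ps_sum j.+1 (fun e => ps_scale ('C(j, e))%:R (ps_mul (Dj e x) (Dpj (j - e) u))).
Proof.
have qp := q_gt1.
have hjT := j_lt j.
split; [|split; [|split]].
- move=> al hal; apply: approx_eq => k.
  pose a n := H k.+1 (hasse n x).
  have hq : (al%:P) ^+ q = al%:P by rewrite -polyC_exp expf_card.
  exists ((al%:P) ^+ j * dP (T j) (fun n d => a n ^+ d) j); split.
  + rewrite -(dP_scale _ (T j) _ hq j (fun n d => a n ^+ d) (fun n d => (al%:P * a n) ^+ d) hjT); last first.
      by move=> n r _; rewrite exprMn.
    by apply: ap_Dj_gen => n; apply: ap_hasse_scale.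
  + rewrite -polyC_exp; apply: ap_scale; apply: ap_Dj_gen => n; exact: ap_H.
- apply: approx_eq => k.
  pose a n := H k.+1 (hasse n x); pose b n := H k.+1 (hasse n u).
  exists (dP (T j) (fun n d => (a n + b n) ^+ d) j); split.
  + by apply: ap_Dj_gen => n; apply: ap_hasse_add.
  + rewrite (dP_add _ lucP (T j) j (fun n d => a n ^+ d) (fun n d => b n ^+ d) _ hjT); last first.
      by move=> n r _; exact: hzD.
    have h := ap_sum k.+1 j.+1 (fun e => ps_scale ('C(j, e))%:R (ps_mul (Dj e x) (Dj (j - e) u)))
      (fun e => (('C(j, e))%:R)%:P * (dP (T e) (fun n d => a n ^+ d) e *
                   dP (T (j - e)) (fun n d => b n ^+ d) (j - e)%N))
      (fun e _ => ap_scale _ _ _ _ (ap_mul _ _ _ _ _ (ap_Dj_gen _ _ _ _ (fun n => ap_H _ _))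
                                                   (ap_Dj_gen _ _ _ _ (fun n => ap_H _ _)))).
    move=> kk hkk; rewrite (h kk hkk); apply: (congr1 (fun p : {poly F} => p`_kk)); apply: eq_bigr => e _.
    have he : (e <= j)%N by rewrite -ltnS.
    rewrite polyC_natr mulrA (dP_ext _ (T j) _ e (T_mono _ _ he)); last by move=> n; rewrite expr0.
    rewrite (dP_ext _ (T j) _ (j - e)%N (T_mono _ _ (leq_subr _ _))) //.
- move=> al hal; apply: approx_eq => k.
  pose a n := H k.+1 (hasse n x).
  have hq : (al%:P) ^+ q = al%:P by rewrite -polyC_exp expf_card.
  exists ((al%:P) ^+ j * dP (T j) (fun n d => blk (a n) d) j); split.
  + rewrite -(dP_scale _ (T j) _ hq j (fun n d => blk (a n) d) (fun n d => blk (al%:P * a n) d) hjT); last first.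
      by move=> n r _; rewrite blk_scale.
    by apply: ap_Dpj_gen => n; apply: ap_hasse_scale.
  + rewrite -polyC_exp; apply: ap_scale; apply: ap_Dpj_gen => n; exact: ap_H.
- apply: approx_eq => k.
  pose a n := H k.+1 (hasse n x); pose b n := H k.+1 (hasse n u).
  exists (dP (T j) (fun n d => blk (a n + b n) d) j); split.
  + by apply: ap_Dpj_gen => n; apply: ap_hasse_add.
  + rewrite (dP_add _ lucP (T j) j (fun n d => a n ^+ d) (fun n d => blk (b n) d) _ hjT); last first.
      by move=> n r hr; exact: hzDp.
    have h := ap_sum k.+1 j.+1 (fun e => ps_scale ('C(j, e))%:R (ps_mul (Dj e x) (Dpj (j - e) u)))
      (fun e => (('C(j, e))%:R)%:P * (dP (T e) (fun n d => a n ^+ d) e *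
                   dP (T (j - e)) (fun n d => blk (b n) d) (j - e)%N))
      (fun e _ => ap_scale _ _ _ _ (ap_mul _ _ _ _ _ (ap_Dj_gen _ _ _ _ (fun n => ap_H _ _))
                                                   (ap_Dpj_gen _ _ _ _ (fun n => ap_H _ _)))).
    move=> kk hkk; rewrite (h kk hkk); apply: (congr1 (fun p : {poly F} => p`_kk)); apply: eq_bigr => e _.
    have he : (e <= j)%N by rewrite -ltnS.
    rewrite polyC_natr mulrA (dP_ext _ (T j) _ e (T_mono _ _ he)); last by move=> n; rewrite expr0.
    rewrite (dP_ext _ (T j) _ (j - e)%N (T_mono _ _ (leq_subr _ _))) //.
    by move=> n; rewrite blk0.
Qed.

End L.

Theorem proposition4 (F : finFieldType) (j : nat) (x u : ps F) :
  (forall alpha : F, alpha != 0 ->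
     Dj j (ps_scale alpha x) = ps_scale (alpha ^+ j) (Dj j x)) /\
  Dj j (ps_add x u) =
    ps_sum j.+1 (fun e => ps_scale ('C(j, e))%:R (ps_mul (Dj e x) (Dj (j - e) u))) /\
  (forall alpha : F, alpha != 0 ->
     Dpj j (ps_scale alpha x) = ps_scale (alpha ^+ j) (Dpj j x)) /\
  Dpj j (ps_add x u) =
    ps_sum j.+1 (fun e => ps_scale ('C(j, e))%:R (ps_mul (Dj e x) (Dpj (j - e) u))).
Proof. exact: main_all. Qed.
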